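(* Let $\Gamma$ be a subgroup of $\mathbb{R}$ commensurable with $\mathbb{Z}$ (i.e. an arithmetic lattice for $G(\mathbb{Z})=\mathbb{Z}$, $G(\mathbb{R})=\mathbb{R}$). Then $\log(\mathbf{C}_n(\Gamma,\mathbb{R})) \simeq \log(n)$. More precisely, $$ n (\log n)^{\log 2} \preceq \mathbf{C}_n(\Gamma,\mathbb{R}) \preceq n \log n. $$
   Context: For subgroups $\Delta_1,\Delta_2$ of a group, $c(\Delta_1,\Delta_2) = [\Delta_1:\Delta_1\cap\Delta_2][\Delta_2:\Delta_1\cap\Delta_2]$. $\mathbf{C}_n(\Gamma,\mathbb{R})$ is the number of subgroups $\Delta \leq \mathbb{R}$ with $c(\Gamma,\Delta) \leq n$. For functions $f,g$ on $\mathbb{N}$, $f \preceq g$ means there exists $C>0$ with $f(n) \leq C g(Cn)$ for all $n$; $f \simeq g$ means $f\preceq g$ and $g \preceq f$. $\log$ denotes the natural logarithm. *)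

(* Defs.v *)
From Stdlib Require Import Reals Lra Lia ZArith.
Open Scope R_scope.

Definition rset := R -> Prop.

Definition is_subgroup (A : rset) : Prop :=
  A 0 /\ (forall x y, A x -> A y -> A (x - y)).

Definition setI (A B : rset) : rset := fun x => A x /\ B x.

Definition Zset : rset := fun x => exists z : Z, x = IZR z.

(* index_eq A B k : B <= A has exactly k cosets in A, i.e. [A : B] = k.
   f enumerates a complete, irredundant system of coset representatives. *)
Definition index_eq (A B : rset) (k : nat) : Prop :=
  exists f : nat -> R,
    (forall i, (i < k)%nat -> A (f i)) /\
    (forall i j, (i < k)%nat -> (j < k)%nat -> B (f i - f j) -> i = j) /\
    (forall a, A a -> exists i, (i < k)%nat /\ B (a - f i)).

(* c(D1,D2) <= n, where c(D1,D2) = [D1 : D1 cap D2][D2 : D1 cap D2]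
   (infinite when one index is infinite). *)
Definition c_le (D1 D2 : rset) (n : nat) : Prop :=
  exists i j : nat,
    index_eq D1 (setI D1 D2) i /\ index_eq D2 (setI D1 D2) j /\ (i * j <= n)%nat.

Definition commensurable (D1 D2 : rset) : Prop := exists n, c_le D1 D2 n.

(* The family of subsets satisfying P has exactly m members
   (subsets identified up to extensional equality). *)
Definition card_sets_eq (P : rset -> Prop) (m : nat) : Prop :=
  exists f : nat -> rset,
    (forall i, (i < m)%nat -> P (f i)) /\
    (forall i j, (i < m)%nat -> (j < m)%nat ->
        (forall x, f i x <-> f j x) -> i = j) /\
    (forall D, P D -> exists i, (i < m)%nat /\ forall x, f i x <-> D x).

Definition Cn_eq (G : rset) (n m : nat) : Prop :=
  card_sets_eq (fun D => is_subgroup D /\ c_le G D n) m.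

Definition preceq (f g : nat -> R) : Prop :=
  exists C : nat, (0 < C)%nat /\ forall n, f n <= INR C * g (C * n)%nat.

Definition simeq (f g : nat -> R) : Prop := preceq f g /\ preceq g f.

(* real power x^y for x >= 0, with 0^y = 0. *)
Definition rpow (x y : R) : R := if Rlt_dec 0 x then Rpower x y else 0.

(* Main.v *)
Require Import Defs.
From Stdlib Require Import Reals Lra Lia ZArith List ClassicalEpsilon Classical.
Open Scope R_scope.

Definition mult (p : R) : rset := fun x => exists z : Z, x = p * IZR z.

Lemma sub_neg A x : is_subgroup A -> A x -> A (- x).
Proof. intros [H0 Hs] Hx. replace (-x) with (0 - x) by ring. auto. Qed.

Lemma sub_add A x y : is_subgroup A -> A x -> A y -> A (x + y).
Proof. intros HA Hx Hy. destruct HA as [H0 Hs].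
  replace (x + y) with (x - (0 - y)) by ring. auto. Qed.

Lemma sub_mulZ A x (z : Z) : is_subgroup A -> A x -> A (IZR z * x).
Proof.
  intros HA Hx. induction z using Z.peano_ind.
  - replace (IZR 0 * x) with 0 by (simpl; ring). apply HA.
  - rewrite succ_IZR. replace ((IZR z + 1) * x) with (IZR z * x + x) by ring.
    apply sub_add; auto.
  - rewrite <- Z.sub_1_r, minus_IZR.
    replace ((IZR z - IZR 1) * x) with (IZR z * x - x) by (simpl; ring).
    apply HA; auto.
Qed.

Lemma sub_mulN A x (n : nat) : is_subgroup A -> A x -> A (INR n * x).
Proof. intros. rewrite INR_IZR_INZ. apply sub_mulZ; auto. Qed.

Lemma mult_sub p : is_subgroup (mult p).
Proof.
  split. exists 0%Z. simpl; ring.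
  intros x y [a Ha] [b Hb]. exists (a - b)%Z. rewrite minus_IZR. subst; ring.
Qed.

Lemma setI_sub A B : is_subgroup A -> is_subgroup B -> is_subgroup (setI A B).
Proof.
  intros [A0 As] [B0 Bs]. split. split; auto.
  intros x y [] []. split; auto.
Qed.

Lemma sub_ext A B : (forall x, A x <-> B x) -> is_subgroup A -> is_subgroup B.
Proof. intros E [H0 Hs]. split. apply E; auto. intros x y Hx Hy. apply E, Hs; apply E; auto. Qed.

Lemma index_ext A B A' B' k : (forall x, A x <-> A' x) -> (forall x, B x <-> B' x) ->
  index_eq A B k -> index_eq A' B' k.
Proof.
  intros EA EB [f [H1 [H2 H3]]]. exists f. split; [|split].
  - intros. apply EA; auto.
  - intros i j Hi Hj HB. apply H2; auto. apply EB; auto.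
  - intros a Ha. destruct (H3 a) as [i [Hi HB]]. apply EA; auto. exists i. split; auto. apply EB; auto.
Qed.

Lemma pigeon m k (h : nat -> nat) : (forall t, (t < m)%nat -> (h t < k)%nat) ->
  (forall s t, (s < m)%nat -> (t < m)%nat -> h s = h t -> s = t) -> (m <= k)%nat.
Proof.
  intros Hk Hi.
  replace m with (length (map h (seq 0 m))) by (rewrite length_map, length_seq; auto).
  replace k with (length (seq 0 k)) by (rewrite length_seq; auto).
  apply NoDup_incl_length.
  - apply NoDup_map_NoDup_ForallPairs. intros a b Ha Hb E.
    apply in_seq in Ha. apply in_seq in Hb. apply Hi; auto; lia. apply seq_NoDup.
  - intros y Hy. apply in_map_iff in Hy. destruct Hy as [x [<- Hx]]. apply in_seq in Hx.
    apply in_seq. specialize (Hk x). lia.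
Qed.

Lemma index_lower A B k m (x : nat -> R) : index_eq A B k -> is_subgroup B ->
  (forall t, (t < m)%nat -> A (x t)) ->
  (forall s t, (s < m)%nat -> (t < m)%nat -> B (x s - x t) -> s = t) -> (m <= k)%nat.
Proof.
  intros [f [H1 [H2 H3]]] HB HA Hinj.
  assert (E : forall t, exists i, (t < m)%nat -> (i < k)%nat /\ B (x t - f i)).
  { intro t. destruct (lt_dec t m) as [lt|nlt].
    - destruct (H3 (x t) (HA t lt)) as [i Hi]. exists i; auto.
    - exists 0%nat. intro; lia. }
  set (h := fun t => proj1_sig (constructive_indefinite_description _ (E t))).
  assert (Hh : forall t, (t < m)%nat -> (h t < k)%nat /\ B (x t - f (h t))).
  { intros t Ht. unfold h. destruct (constructive_indefinite_description _ (E t)); simpl; auto. }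
  apply (pigeon m k h).
  - intros t Ht. apply Hh; auto.
  - intros s t Hs Ht Est. apply Hinj; auto.
    destruct (Hh s Hs) as [_ Bs]. destruct (Hh t Ht) as [_ Bt]. rewrite Est in Bs.
    replace (x s - x t) with ((x s - f (h t)) - (x t - f (h t))) by ring. apply HB; auto.
Qed.

Lemma index_mult A B k x : index_eq A B k -> is_subgroup A -> is_subgroup B -> A x ->
  exists m, (1 <= m <= k)%nat /\ B (INR m * x).
Proof.
  intros Hidx HA HB Hx. apply NNPP. intro Hn.
  assert (S k <= k)%nat; [|lia].
  apply (index_lower A B k (S k) (fun t => INR t * x) Hidx HB).
  - intros. apply sub_mulN; auto.
  - intros s t Hs Ht HBst. destruct (lt_eq_lt_dec s t) as [[lt|eq]|gt]; auto; exfalso; apply Hn.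
    + exists (t - s)%nat. split. lia. rewrite minus_INR by lia.
      replace ((INR t - INR s) * x) with (- (INR s * x - INR t * x)) by ring. apply sub_neg; auto.
    + exists (s - t)%nat. split. lia. rewrite minus_INR by lia.
      replace ((INR s - INR t) * x) with (INR s * x - INR t * x) by ring. auto.
Qed.

Lemma cyclic A q (M N : nat) : is_subgroup A -> 0 < q -> (1 <= M)%nat -> (1 <= N)%nat ->
  A (q * INR M) -> (forall x, A x -> exists z : Z, x = q * IZR z / INR N) ->
  exists u : nat, (1 <= u)%nat /\ forall x, A x <-> mult (q * INR u / INR N) x.
Proof.
  intros HA Hq HM HN HAM Hsub.
  assert (HNp : 0 < INR N) by (apply lt_0_INR; lia).
  set (P := fun n => (1 <= n)%nat /\ A (q * INR n / INR N)).
  assert (PMN : P (M * N)%nat).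
  { split. nia. rewrite mult_INR. replace (q * (INR M * INR N) / INR N) with (q * INR M) by (field; lra). auto. }
  destruct (dec_inh_nat_subset_has_unique_least_element P (fun n => classic (P n)) (ex_intro _ _ PMN))
    as [u [[Pu Hmin] _]].
  exists u. split. apply Pu. intro x. split.
  - intro Hx. destruct (Hsub x Hx) as [z Hz].
    set (U := Z.of_nat u).
    assert (HU : (0 < U)%Z) by (unfold U; destruct Pu; lia).
    pose proof (Z.div_mod z U ltac:(lia)) as Hdm.
    pose proof (Z.mod_pos_bound z U HU) as Hb.
    set (r := (z mod U)%Z) in *. set (w := (z / U)%Z) in *.
    assert (Hr : A (q * IZR r / INR N)).
    { replace (q * IZR r / INR N) with (x - IZR w * (q * INR u / INR N)).
      apply HA; auto. apply sub_mulZ; auto. apply Pu.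
      rewrite Hz, Hdm, plus_IZR, mult_IZR. unfold U. rewrite <- INR_IZR_INZ. field. lra. }
    destruct (Z.eq_dec r 0) as [r0|rn0].
    + exists w. rewrite Hz, Hdm, r0, plus_IZR, mult_IZR. unfold U. rewrite <- INR_IZR_INZ. simpl. field. lra.
    + exfalso. assert (Pr : P (Z.to_nat r)).
      { split. lia. rewrite INR_IZR_INZ, Z2Nat.id by lia. auto. }
      specialize (Hmin _ Pr). unfold U in Hb. lia.
  - intros [z Hz]. subst x. rewrite Rmult_comm. apply sub_mulZ; auto. apply Pu.
Qed.

Lemma div_fact m j : (1 <= m <= j)%nat -> Nat.divide m (fact j).
Proof.
  induction j; intros H. lia.
  destruct (Nat.eq_dec m (S j)) as [->|ne].
  - simpl fact. exists (fact j). lia.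
  - destruct IHj as [c Hc]. lia. exists (S j * c)%nat. simpl fact. rewrite Hc. lia.
Qed.

Lemma struct A D I q i j : 0 < q -> is_subgroup D -> (forall x, A x <-> mult q x) ->
  (forall x, I x <-> A x /\ D x) -> index_eq A I i -> index_eq D I j ->
  exists u N : nat, (1 <= u)%nat /\ (1 <= N)%nat /\ forall x, D x <-> mult (q * INR u / INR N) x.
Proof.
  intros Hq HD EA EI HiA HiD.
  assert (HA : is_subgroup A) by (apply (sub_ext (mult q)); [intro; symmetry; auto | apply mult_sub]).
  assert (HI : is_subgroup I).
  { apply (sub_ext (setI A D)). intro x. symmetry. apply EI. apply setI_sub; auto. }
  assert (Aq : A q) by (apply EA; exists 1%Z; simpl; ring).
  destruct (index_mult A I i q HiA HA HI Aq) as [m [Hm Im]].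
  assert (HN := lt_O_fact j).
  destruct (cyclic D q m (fact j) HD Hq ltac:(lia) ltac:(lia)) as [u [Hu Eu]].
  - rewrite Rmult_comm. apply EI; auto.
  - intros d Hd. destruct (index_mult D I j d HiD HD HI Hd) as [md [Hmd Imd]].
    apply EI in Imd. destruct Imd as [Amd _]. apply EA in Amd. destruct Amd as [z Hz].
    destruct (div_fact md j Hmd) as [c Hc].
    exists (z * Z.of_nat c)%Z. rewrite Hc, mult_IZR, <- INR_IZR_INZ, mult_INR.
    assert (0 < INR md) by (apply lt_0_INR; lia).
    assert (0 < INR c). { apply lt_0_INR. destruct c; lia. }
    apply (Rmult_eq_reg_l (INR md)). rewrite Hz. field; lra. lra.
  - exists u, (fact j). split; [auto|split; [lia|auto]].
Qed.

Definition copZ (a b : nat) : Prop := Z.gcd (Z.of_nat a) (Z.of_nat b) = 1%Z.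

Lemma IZR_INR_eq (a : nat) : IZR (Z.of_nat a) = INR a.
Proof. symmetry. apply INR_IZR_INZ. Qed.

Lemma mult_inter q a b : 0 < q -> (1 <= a)%nat -> (1 <= b)%nat -> copZ a b ->
  forall x, (mult q x /\ mult (q * INR a / INR b) x) <-> mult (q * INR a) x.
Proof.
  intros Hq Ha Hb Hc x. assert (0 < INR b) by (apply lt_0_INR; lia).
  split.
  - intros [[m Hm] [k Hk]].
    assert (E : (m * Z.of_nat b = Z.of_nat a * k)%Z).
    { apply eq_IZR. rewrite !mult_IZR, !IZR_INR_eq.
      apply (Rmult_eq_reg_l q); [|lra]. apply (Rmult_eq_reg_r (/ INR b)); [|apply Rinv_neq_0_compat; lra].
      replace (q * (IZR m * INR b) * / INR b) with (q * IZR m) by (field; lra).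
      rewrite <- Hm, Hk. field. lra. }
    assert (D : (Z.of_nat a | Z.of_nat b * m)%Z). { exists k. lia. }
    apply Z.gauss in D; auto. destruct D as [t Ht]. exists t. rewrite Hm, Ht, mult_IZR, IZR_INR_eq. ring.
  - intros [z Hz]. split.
    + exists (Z.of_nat a * z)%Z. rewrite Hz, mult_IZR, IZR_INR_eq. ring.
    + exists (Z.of_nat b * z)%Z. rewrite Hz, mult_IZR, IZR_INR_eq. field. lra.
Qed.

Lemma small_diff p k s t z : 0 < p -> (s < k)%nat -> (t < k)%nat ->
  p * INR s - p * INR t = p * INR k * IZR z -> s = t.
Proof.
  intros Hp Hs Ht E.
  assert (E' : (Z.of_nat s - Z.of_nat t = Z.of_nat k * z)%Z).
  { apply eq_IZR. rewrite minus_IZR, mult_IZR, !IZR_INR_eq.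
    apply (Rmult_eq_reg_l p); [|lra]. rewrite <- Rmult_assoc, <- E. ring. }
  destruct (Z.eq_dec z 0) as [->|nz]. lia. exfalso. assert (z < 0 \/ z > 0)%Z as [zl|zg] by lia; nia.
Qed.

Lemma idx_gen p k : 0 < p -> (1 <= k)%nat -> index_eq (mult p) (mult (p * INR k)) k.
Proof.
  intros Hp Hk. exists (fun i => p * INR i). split; [|split].
  - intros i _. exists (Z.of_nat i). rewrite IZR_INR_eq. auto.
  - intros i j Hi Hj [z Hz]. eapply small_diff; eauto.
  - intros a [z Hz]. set (K := Z.of_nat k).
    pose proof (Z.div_mod z K ltac:(unfold K; lia)) as Hdm.
    pose proof (Z.mod_pos_bound z K ltac:(unfold K; lia)) as Hb.
    exists (Z.to_nat (z mod K)). split. unfold K in *; lia.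
    exists (z / K)%Z. rewrite INR_IZR_INZ, Z2Nat.id by lia.
    rewrite Hz. rewrite Hdm at 1. rewrite plus_IZR, mult_IZR. unfold K. rewrite IZR_INR_eq. ring.
Qed.

Lemma lower_gen p k i B : 0 < p -> index_eq (mult p) B i ->
  (forall x, B x <-> mult (p * INR k) x) -> (k <= i)%nat.
Proof.
  intros Hp Hi EB.
  apply (index_lower _ _ i k (fun t => p * INR t) Hi).
  - apply (sub_ext (mult (p * INR k))). intro; symmetry; auto. apply mult_sub.
  - intros t _. exists (Z.of_nat t). rewrite IZR_INR_eq. auto.
  - intros s t Hs Ht HB. apply EB in HB. destruct HB as [z Hz]. eapply small_diff; eauto.
Qed.

Lemma gen_inj q a b a' b' : 0 < q -> (1 <= a)%nat -> (1 <= b)%nat -> (1 <= a')%nat -> (1 <= b')%nat ->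
  copZ a b -> copZ a' b' ->
  (forall x, mult (q * INR a / INR b) x <-> mult (q * INR a' / INR b') x) -> a = a' /\ b = b'.
Proof.
  intros Hq Ha Hb Ha' Hb' Hc Hc' E.
  assert (0 < INR a) by (apply lt_0_INR; lia). assert (0 < INR b) by (apply lt_0_INR; lia).
  assert (0 < INR a') by (apply lt_0_INR; lia). assert (0 < INR b') by (apply lt_0_INR; lia).
  set (p := q * INR a / INR b) in *. set (p' := q * INR a' / INR b') in *.
  assert (Hp : 0 < p) by (unfold p; apply Rdiv_lt_0_compat; nra).
  assert (Hp' : 0 < p') by (unfold p'; apply Rdiv_lt_0_compat; nra).
  assert (M1 : mult p p) by (exists 1%Z; simpl; ring).
  assert (M2 : mult p' p') by (exists 1%Z; simpl; ring).
  destruct (proj1 (E p) M1) as [z Hz].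
  destruct (proj2 (E p') M2) as [w Hw].
  assert (Hzw : (z * w = 1)%Z).
  { apply eq_IZR. rewrite mult_IZR. rewrite Hw in Hz.
    apply (Rmult_eq_reg_l p); [|lra]. simpl. nra. }
  apply Z.eq_mul_1 in Hzw. destruct Hzw as [Hz1 | Hz1]; rewrite Hz1 in Hz; simpl in Hz.
  2: { exfalso. nra. }
  assert (Eab : (a * b' = a' * b)%nat).
  { apply INR_eq. rewrite !mult_INR. unfold p, p' in Hz.
    apply (Rmult_eq_reg_l q); [|lra]. apply (Rmult_eq_reg_r (/ INR b * / INR b')).
    2: { apply Rmult_integral_contrapositive; split; apply Rinv_neq_0_compat; lra. }
    replace (q * (INR a * INR b') * (/ INR b * / INR b')) with (q * INR a / INR b) by (field; lra).
    rewrite Hz. field. lra. }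
  assert (Aa : (Z.of_nat a = Z.of_nat a')%Z).
  { apply Z.divide_antisym_nonneg; try lia.
    - apply (Z.gauss _ (Z.of_nat b)); auto. exists (Z.of_nat b'). lia.
    - apply (Z.gauss _ (Z.of_nat b')); auto. exists (Z.of_nat b). lia. }
  assert (a = a') by lia. subst a'. split; auto. nia.
Qed.

Open Scope nat_scope.

Definition pairs (n : nat) : list (nat * nat) :=
  flat_map (fun a => map (fun b => (a, b)) (seq 1 (n / a))) (seq 1 n).
Definition copb (p : nat * nat) : bool := Z.eqb (Z.gcd (Z.of_nat (fst p)) (Z.of_nat (snd p))) 1.
Definition Lst (n : nat) := filter copb (pairs n).
Definition Cc (n : nat) := length (Lst n).

Lemma le_div_iff a b n : 1 <= a -> (b <= n / a <-> a * b <= n).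
Proof.
  intros Ha. split; intro H.
  - pose proof (Nat.Div0.mul_div_le n a). nia.
  - apply Nat.div_le_lower_bound; lia.
Qed.

Lemma in_pairs n a b : In (a, b) (pairs n) <-> 1 <= a /\ 1 <= b /\ a * b <= n.
Proof.
  unfold pairs. rewrite in_flat_map. split.
  - intros [x [Hx Hy]]. apply in_seq in Hx. apply in_map_iff in Hy. destruct Hy as [y [E Hy]].
    inversion E; subst. apply in_seq in Hy. rewrite <- le_div_iff by lia. lia.
  - intros [Ha [Hb Hab]]. exists a. split. apply in_seq. nia.
    apply in_map_iff. exists b. split; auto. apply in_seq. rewrite <- le_div_iff in Hab by lia. lia.
Qed.

Lemma copb_iff a b : copb (a, b) = true <-> copZ a b.
Proof. unfold copb, copZ. simpl. apply Z.eqb_eq. Qed.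

Lemma in_L n a b : In (a, b) (Lst n) <-> (1 <= a /\ 1 <= b /\ a * b <= n) /\ copZ a b.
Proof. unfold Lst. rewrite filter_In, in_pairs, copb_iff. tauto. Qed.

Lemma NoDup_flat_map_gen {A B} (g : A -> list B) (l : list A) : NoDup l ->
  (forall a, NoDup (g a)) -> (forall a a' x, In x (g a) -> In x (g a') -> a = a') ->
  NoDup (flat_map g l).
Proof.
  induction l as [|a l IH]; intros Hl Hg Hd; simpl. constructor.
  inversion Hl; subst. apply NoDup_app; auto.
  intros x Hx Hx'. apply in_flat_map in Hx'. destruct Hx' as [a' [Ha' Hx']].
  assert (a = a') by (eapply Hd; eauto). subst. contradiction.
Qed.

Lemma NoDup_pairs n : NoDup (pairs n).
Proof.
  apply NoDup_flat_map_gen. apply seq_NoDup.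
  - intro a. apply NoDup_map_NoDup_ForallPairs. intros x y _ _ E. inversion E; auto. apply seq_NoDup.
  - intros a a' x H1 H2. apply in_map_iff in H1. apply in_map_iff in H2.
    destruct H1 as [y1 [<- _]]. destruct H2 as [y2 [E _]]. inversion E; auto.
Qed.

Lemma NoDup_L n : NoDup (Lst n).
Proof. apply NoDup_filter, NoDup_pairs. Qed.

Lemma len_pairs n : length (pairs n) = list_sum (map (fun a => n / a) (seq 1 n)).
Proof.
  unfold pairs. rewrite length_flat_map. f_equal. apply map_ext. intro a.
  rewrite length_map, length_seq. auto.
Qed.

Lemma Cc_ge n : n <= Cc n.
Proof.
  unfold Cc. replace n with (length (map (fun a => (a, 1)) (seq 1 n))) at 1
    by (rewrite length_map, length_seq; auto).
  apply NoDup_incl_length.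
  - apply NoDup_map_NoDup_ForallPairs. intros x y _ _ E. inversion E; auto. apply seq_NoDup.
  - intros p Hp. apply in_map_iff in Hp. destruct Hp as [a [<- Ha]]. apply in_seq in Ha.
    apply in_L. split. lia. unfold copZ. apply Z.gcd_1_r.
Qed.

Lemma Cc_le_pairs n : Cc n <= length (pairs n).
Proof. apply filter_length_le. Qed.

Lemma Cc_le_sq n : Cc n <= n * n.
Proof.
  eapply Nat.le_trans. apply Cc_le_pairs.
  replace (n * n) with (length (list_prod (seq 1 n) (seq 1 n))) by (rewrite length_prod, length_seq; auto).
  apply NoDup_incl_length. apply NoDup_pairs.
  intros [a b] H. apply in_pairs in H. apply in_prod; apply in_seq; nia.
Qed.

Lemma key n : length (pairs n) <=
  Cc n + list_sum (map (fun d => length (pairs (n / (d * d)))) (seq 2 (n - 1))).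
Proof.
  set (big := Lst n ++ flat_map (fun d => map (fun p => (d * fst p, d * snd p)) (pairs (n / (d * d)))) (seq 2 (n - 1))).
  replace (Cc n + list_sum (map (fun d => length (pairs (n / (d * d)))) (seq 2 (n - 1)))) with (length big).
  2: { unfold big, Cc. rewrite length_app, length_flat_map. f_equal. f_equal. apply map_ext. intro. apply length_map. }
  apply NoDup_incl_length. apply NoDup_pairs.
  intros [a b] Hab. unfold big. apply in_or_app.
  destruct (copb (a, b)) eqn:Ec.
  - left. unfold Lst. apply filter_In. auto.
  - right. apply in_pairs in Hab. destruct Hab as [Ha [Hb Hn]].
    set (g := Z.gcd (Z.of_nat a) (Z.of_nat b)).
    assert (g0 : (0 <= g)%Z) by apply Z.gcd_nonneg.
    assert (gn0 : g <> 0%Z). { intro E. apply Z.gcd_eq_0 in E. lia. }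
    assert (gn1 : g <> 1%Z). { intro E. unfold copb in Ec. simpl in Ec. fold g in Ec. rewrite E in Ec. discriminate. }
    destruct (Z.gcd_divide_l (Z.of_nat a) (Z.of_nat b)) as [ka Hka].
    destruct (Z.gcd_divide_r (Z.of_nat a) (Z.of_nat b)) as [kb Hkb]. fold g in Hka, Hkb.
    assert (ka0 : (0 < ka)%Z) by nia. assert (kb0 : (0 < kb)%Z) by nia.
    set (d := Z.to_nat g). set (a' := Z.to_nat ka). set (b' := Z.to_nat kb).
    assert (Ea : a = d * a'). { apply Nat2Z.inj. rewrite Nat2Z.inj_mul. unfold d, a'. rewrite !Z2Nat.id by lia. lia. }
    assert (Eb : b = d * b'). { apply Nat2Z.inj. rewrite Nat2Z.inj_mul. unfold d, b'. rewrite !Z2Nat.id by lia. lia. }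
    assert (d2 : 2 <= d) by (unfold d; lia).
    assert (a'1 : 1 <= a') by (unfold a'; lia). assert (b'1 : 1 <= b') by (unfold b'; lia).
    apply in_flat_map. exists d. split.
    + apply in_seq. nia.
    + apply in_map_iff. exists (a', b'). split. simpl. rewrite Ea, Eb. auto.
      apply in_pairs. split; auto. split; auto. apply le_div_iff. nia. nia.
Qed.

Open Scope R_scope.
Lemma ln_le x y : 0 < x -> x <= y -> ln x <= ln y.
Proof. intros Hx Hxy. destruct (Rle_lt_or_eq_dec _ _ Hxy) as [lt|eq]. left. apply ln_increasing; auto. subst; lra. Qed.

Lemma ln_le_sub1 y : 0 < y -> ln y <= y - 1.
Proof.
  intro Hy. pose proof (exp_ineq1_le (y - 1)). rewrite <- (ln_exp (y - 1)). apply ln_le; auto. lra.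
Qed.

Lemma ln_step x : 1 <= x -> / (x + 1) <= ln (x + 1) - ln x /\ ln (x + 1) - ln x <= / x.
Proof.
  intro Hx. split.
  - pose proof (ln_le_sub1 (x / (x + 1)) ltac:(apply Rdiv_lt_0_compat; lra)).
    replace (ln x) with (ln (x / (x + 1)) + ln (x + 1)).
    2: { rewrite <- ln_mult. f_equal. field. lra. apply Rdiv_lt_0_compat; lra. lra. }
    replace (/ (x + 1)) with (- (x / (x + 1) - 1)) by (field; lra). lra.
  - pose proof (ln_le_sub1 ((x + 1) / x) ltac:(apply Rdiv_lt_0_compat; lra)).
    replace (ln (x + 1)) with (ln ((x + 1) / x) + ln x).
    2: { rewrite <- ln_mult. f_equal. field. lra. apply Rdiv_lt_0_compat; lra. lra. }
    replace (/ x) with ((x + 1) / x - 1) by (field; lra). lra.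
Qed.

Lemma ln_INR_nonneg n : 0 <= ln (INR n).
Proof.
  destruct n. simpl. unfold ln. destruct (Rlt_dec 0 0); [exfalso; lra|lra].
  rewrite <- ln_1. apply ln_le. lra. apply (le_INR 1). lia.
Qed.

Fixpoint Hr (k : nat) : R := match k with O => 0 | S k' => Hr k' + / INR k end.

Lemma Hr_up k : (1 <= k)%nat -> Hr k <= 1 + ln (INR k).
Proof.
  induction k; intro Hk. lia.
  destruct (Nat.eq_dec k 0) as [->|nz]. simpl. rewrite ln_1. lra.
  change (Hr (S k)) with (Hr k + / INR (S k)). rewrite S_INR. assert (1 <= INR k) by (apply (le_INR 1); lia).
  destruct (ln_step (INR k) H). specialize (IHk ltac:(lia)). lra.
Qed.

Lemma Hr_low k : ln (INR (S k)) <= Hr k.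
Proof.
  induction k. simpl. rewrite ln_1. lra.
  change (Hr (S k)) with (Hr k + / INR (S k)). rewrite (S_INR (S k)). assert (1 <= INR (S k)) by (apply (le_INR 1); lia).
  destruct (ln_step (INR (S k)) H). lra.
Qed.

Lemma sum_up n k : INR (list_sum (map (fun a => (n / a)%nat) (seq 1 k))) <= INR n * Hr k.
Proof.
  induction k. simpl. lra.
  rewrite seq_S, map_app, list_sum_app, plus_INR. change (Hr (S k)) with (Hr k + / INR (S k)).
  replace (list_sum (map (fun a => (n / a)%nat) ((1 + k)%nat :: nil))) with (n / S k)%nat by (simpl; lia).
  assert (INR (n / S k) * INR (S k) <= INR n).
  { rewrite <- mult_INR. apply le_INR. rewrite Nat.mul_comm. apply Nat.Div0.mul_div_le. }
  assert (0 < INR (S k)) by (apply lt_0_INR; lia).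
  assert (INR (n / S k) <= INR n * / INR (S k)).
  { apply (Rmult_le_reg_r (INR (S k))); auto. field_simplify; lra. }
  nra.
Qed.

Lemma sum_low n k : INR n * Hr k - INR k <= INR (list_sum (map (fun a => (n / a)%nat) (seq 1 k))).
Proof.
  induction k. simpl. lra.
  rewrite seq_S, map_app, list_sum_app, plus_INR. change (Hr (S k)) with (Hr k + / INR (S k)).
  replace (list_sum (map (fun a => (n / a)%nat) ((1 + k)%nat :: nil))) with (n / S k)%nat by (simpl; lia).
  assert (0 < INR (S k)) by (apply lt_0_INR; lia).
  assert (INR n < (INR (n / S k) + 1) * INR (S k)).
  { pose proof (Nat.div_mod_eq n (S k)). pose proof (Nat.mod_upper_bound n (S k) ltac:(lia)).
    rewrite <- (S_INR (n / S k)), <- mult_INR. apply lt_INR. nia. }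
  assert (INR n * / INR (S k) - 1 <= INR (n / S k)).
  { apply (Rmult_le_reg_r (INR (S k))); auto. field_simplify; lra. }
  rewrite (S_INR k) in *. lra.
Qed.

Lemma pairs_up m n : (m <= n)%nat -> (1 <= n)%nat ->
  INR (length (pairs m)) <= INR m * (1 + ln (INR n)).
Proof.
  intros Hmn Hn. rewrite len_pairs. destruct m. simpl. lra.
  eapply Rle_trans. apply sum_up.
  apply Rmult_le_compat_l. apply pos_INR.
  eapply Rle_trans. apply Hr_up. lia.
  assert (ln (INR (S m)) <= ln (INR n)). { apply ln_le. apply lt_0_INR; lia. apply le_INR; auto. }
  lra.
Qed.

Lemma sum_sq n k : (1 <= n)%nat ->
  INR (list_sum (map (fun d => length (pairs (n / (d * d))%nat)) (seq 2 k))) <=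
  INR n * (1 + ln (INR n)) * (3/4).
Proof.
  intro Hn. set (W := INR n * (1 + ln (INR n))).
  assert (W0 : 0 <= W). { unfold W. pose proof (ln_INR_nonneg n). pose proof (pos_INR n). nra. }
  assert (term : forall d, (2 <= d)%nat -> INR (length (pairs (n / (d * d))%nat)) <= W / (INR d * INR d)).
  { intros d Hd. eapply Rle_trans. apply (pairs_up _ n). apply Nat.Div0.div_le_upper_bound. assert (1 <= d * d)%nat by nia. nia. lia.
    assert (0 < INR d) by (apply lt_0_INR; lia).
    assert (INR (n / (d * d)) * (INR d * INR d) <= INR n).
    { rewrite <- !mult_INR. apply le_INR. rewrite Nat.mul_comm. apply Nat.Div0.mul_div_le. }
    pose proof (ln_INR_nonneg n).
    apply Rle_trans with (INR n / (INR d * INR d) * (1 + ln (INR n))).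
    2: { right. unfold W. field. lra. }
    apply Rmult_le_compat_r. lra.
    apply (Rmult_le_reg_r (INR d * INR d)). nra. field_simplify; nra. }
  assert (P : forall k, (1 <= k)%nat ->
    INR (list_sum (map (fun d => length (pairs (n / (d * d))%nat)) (seq 2 k))) <= W * (3/4 - / INR (S k))).
  { induction k0; intro Hk. lia.
    rewrite seq_S, map_app, list_sum_app, plus_INR.
    replace (list_sum (map (fun d => length (pairs (n / (d * d))%nat)) ((2 + k0)%nat :: nil)))
      with (length (pairs (n / ((2 + k0) * (2 + k0)))%nat)) by (simpl; lia).
    pose proof (term (2 + k0)%nat ltac:(lia)) as T.
    destruct (Nat.eq_dec k0 0) as [->|nz].
    - simpl in *. replace (W * (3/4 - / (1 + 1))) with (W / ((1+1) * (1+1))) by (field). lra.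
    - specialize (IHk0 ltac:(lia)).
      replace (INR (2 + k0)) with (INR (S k0) + 1) in T by (rewrite !S_INR, plus_INR; simpl; ring).
      replace (INR (S (S k0))) with (INR (S k0) + 1) by (symmetry; apply S_INR).
      assert (1 <= INR (S k0)) by (apply (le_INR 1); lia).
      set (x := INR (S k0)) in *.
      assert (W / ((x + 1) * (x + 1)) <= W * (/ x - / (x + 1))).
      { replace (W * (/ x - / (x + 1))) with (W / (x * (x + 1))) by (field; lra).
        unfold Rdiv. apply Rmult_le_compat_l; auto. apply Rinv_le_contravar; nra. }
      lra. }
  destruct k. simpl. lra.
  eapply Rle_trans. apply P. lia.
  assert (0 < / INR (S (S k))) by (apply Rinv_0_lt_compat, lt_0_INR; lia). nra.
Qed.

Lemma Cc_low n : (1 <= n)%nat -> INR n * ln (INR n) / 4 - 7/4 * INR n <= INR (Cc n).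
Proof.
  intro Hn. pose proof (le_INR _ _ (key n)) as K. rewrite plus_INR in K.
  pose proof (sum_sq n (n - 1) Hn).
  pose proof (sum_low n n). rewrite <- len_pairs in H0.
  pose proof (Hr_low n).
  assert (ln (INR n) <= ln (INR (S n))) by (apply ln_le; [apply lt_0_INR; lia| rewrite S_INR; lra]).
  pose proof (pos_INR n). nra.
Qed.

Lemma Cc_up n : INR (Cc n) <= INR n * (1 + ln (INR n)).
Proof.
  destruct n. assert (E0 : Cc 0 = 0%nat) by (pose proof (Cc_le_sq 0); lia). rewrite E0. simpl. lra.
  eapply Rle_trans. apply le_INR, Cc_le_pairs. apply pairs_up; lia.
Qed.

Lemma reduce u N : (1 <= u)%nat -> (1 <= N)%nat ->
  exists a b, (1 <= a)%nat /\ (1 <= b)%nat /\ copZ a b /\ INR u / INR N = INR a / INR b.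
Proof.
  intros Hu HN. set (U := Z.of_nat u). set (M := Z.of_nat N).
  set (g := Z.gcd U M).
  assert (g0 : (0 <= g)%Z) by apply Z.gcd_nonneg.
  assert (gn0 : g <> 0%Z). { intro E. apply Z.gcd_eq_0 in E. unfold U in E. lia. }
  destruct (Z.gcd_divide_l U M) as [ka Hka]. destruct (Z.gcd_divide_r U M) as [kb Hkb]. fold g in Hka, Hkb.
  assert (ka0 : (0 < ka)%Z) by (unfold U in Hka; nia). assert (kb0 : (0 < kb)%Z) by (unfold M in Hkb; nia).
  exists (Z.to_nat ka), (Z.to_nat kb). split. lia. split. lia. split.
  - unfold copZ. rewrite !Z2Nat.id by lia.
    assert (Hc : Z.gcd (U / g) (M / g) = 1%Z) by (apply Z.gcd_div_gcd; auto).
    replace (U / g)%Z with ka in Hc by (rewrite Hka, Z.div_mul; auto).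
    replace (M / g)%Z with kb in Hc by (rewrite Hkb, Z.div_mul; auto). auto.
  - rewrite !INR_IZR_INZ, !Z2Nat.id by lia. fold U M. rewrite Hka, Hkb, !mult_IZR.
    assert (0 < IZR g) by (apply IZR_lt; lia). assert (0 < IZR kb) by (apply IZR_lt; lia).
    field. lra.
Qed.

Lemma inter_char G D qG a b : 0 < qG -> (1 <= a)%nat -> (1 <= b)%nat -> copZ a b ->
  (forall x, G x <-> mult qG x) -> (forall x, D x <-> mult (qG * INR a / INR b) x) ->
  forall x, setI G D x <-> mult (qG * INR a) x.
Proof.
  intros Hq Ha Hb Hc EG ED x. rewrite <- (mult_inter qG a b Hq Ha Hb Hc x).
  unfold setI. rewrite EG, ED. tauto.
Qed.

Lemma mult_eq p p' : p = p' -> forall x, mult p x <-> mult p' x.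
Proof. intros ->. tauto. Qed.

Lemma exp_le x y : x <= y -> exp x <= exp y.
Proof. intro H. destruct (Rle_lt_or_eq_dec _ _ H) as [lt|eq]. left; apply exp_increasing; auto. subst; lra. Qed.

Lemma rpow_bound L : 0 <= L -> rpow L (ln 2) <= 1 + L.
Proof.
  intro HL. unfold rpow. destruct (Rlt_dec 0 L) as [pos|npos]; [|lra].
  unfold Rpower.
  assert (l2 : 0 < ln 2 < 1).
  { split. rewrite <- ln_1. apply ln_increasing; lra.
    rewrite <- (ln_exp 1). apply ln_increasing. lra. pose proof (exp_ineq1 1 ltac:(lra)). lra. }
  destruct (Rle_dec L 1) as [le1|gt1].
  - assert (ln L <= 0) by (rewrite <- ln_1; apply ln_le; lra).
    eapply Rle_trans. apply exp_le with (y := 0). nra. rewrite exp_0. lra.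
  - assert (0 <= ln L) by (rewrite <- ln_1; apply ln_le; lra).
    eapply Rle_trans. apply exp_le with (y := ln L). nra. rewrite exp_ln; lra.
Qed.

Lemma ln_INR_0 : ln (INR 0) = 0.
Proof. simpl. unfold ln. destruct (Rlt_dec 0 0). exfalso; lra. auto. Qed.

Lemma ln3 : 1 <= ln 3.
Proof. rewrite <- (ln_exp 1). apply ln_le. apply exp_pos. apply exp_le_3. Qed.

Lemma lower_main K n : 8 <= ln (INR K) -> (1 <= K)%nat ->
  INR n * rpow (ln (INR n)) (ln 2) <= INR K * INR (Cc (K * n)).
Proof.
  intros lnK HK1.
  assert (K8 : 8 <= INR K).
  { destruct (Rle_dec 8 (INR K)) as [|nle]; auto. exfalso.
    assert (INR K <= 8) by lra. assert (ln (INR K) <= ln 8) by (apply ln_le; [apply lt_0_INR; lia| auto]).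
    assert (ln 8 < 8). { pose proof (ln_le_sub1 8 ltac:(lra)). lra. } lra. }
  pose proof (pos_INR (Cc (K * n))).
  destruct n. simpl (INR 0). rewrite Rmult_0_l. apply Rmult_le_pos; lra.
  set (m := S n) in *.
  assert (Hm : (1 <= m)%nat) by (unfold m; lia).
  assert (0 < INR m) by (apply lt_0_INR; lia).
  pose proof (ln_INR_nonneg m).
  pose proof (rpow_bound _ H1).
  pose proof (Cc_low (K * m) ltac:(nia)) as CL.
  rewrite mult_INR, ln_mult in CL by lra.
  set (x := INR m) in *. set (k := INR K) in *. set (L := ln x) in *.
  assert (P1 : 0 < k * x) by (apply Rmult_lt_0_compat; lra).
  assert (E1 : k * x * (ln k + L) / 4 - 7 / 4 * (k * x) = k * x * (ln k + L - 7) / 4) by field.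
  assert (E2 : k * x * (1 + L) / 4 <= k * x * (ln k + L - 7) / 4).
  { unfold Rdiv. apply Rmult_le_compat_r. lra. apply Rmult_le_compat_l; lra. }
  assert (C1 : k * x * (1 + L) / 4 <= INR (Cc (K * m))) by lra.
  assert (C2 : k * (k * x * (1 + L) / 4) <= k * INR (Cc (K * m))) by (apply Rmult_le_compat_l; lra).
  assert (C3 : x * (1 + L) <= k * (k * x * (1 + L) / 4)).
  { assert (0 <= x * (1 + L)) by (apply Rmult_le_pos; lra).
    replace (k * (k * x * (1 + L) / 4)) with ((k * k / 4) * (x * (1 + L))) by field.
    rewrite <- (Rmult_1_l (x * (1 + L))) at 1. apply Rmult_le_compat_r; auto. nra. }
  assert (C4 : x * rpow L (ln 2) <= x * (1 + L)) by (apply Rmult_le_compat_l; lra).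
  lra.
Qed.

Theorem proposition3 (G : R -> Prop) :
  is_subgroup G -> commensurable G Zset ->
  exists C : nat -> nat,
    (forall n, Cn_eq G n (C n)) /\
    simeq (fun n => ln (INR (C n))) (fun n => ln (INR n)) /\
    preceq (fun n => INR n * rpow (ln (INR n)) (ln 2)) (fun n => INR (C n)) /\
    preceq (fun n => INR (C n)) (fun n => INR n * ln (INR n)).
Proof.
  intros HG [n0 [i0 [j0 [Hi0 [Hj0 _]]]]].
  destruct (struct Zset G (setI G Zset) 1 j0 i0 ltac:(lra) HG) as [u [N [Hu [HN EG0]]]].
  { intro x. unfold Zset, mult. split; intros [z Hz]; exists z; lra. }
  { intro x. unfold setI. tauto. }
  all: auto.
  set (qG := 1 * INR u / INR N) in *.
  assert (Hq : 0 < qG).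
  { unfold qG. apply Rdiv_lt_0_compat. assert (0 < INR u) by (apply lt_0_INR; lia). lra. apply lt_0_INR; lia. }
  exists Cc. split; [|split; [split|split]].
  -
    intro n.
    exists (fun k => mult (qG * INR (fst (nth k (Lst n) (0, 0)%nat)) / INR (snd (nth k (Lst n) (0, 0)%nat)))).
    split; [|split].
    + intros k Hk. assert (Hin := nth_In (Lst n) (0, 0)%nat Hk).
      destruct (nth k (Lst n) (0, 0)%nat) as [a b]. simpl.
      apply in_L in Hin. destruct Hin as [[Ha [Hb Hab]] Hc].
      split. apply mult_sub.
      set (g := qG * INR a / INR b).
      assert (0 < INR b) by (apply lt_0_INR; lia).
      assert (Hg : 0 < g). { unfold g. apply Rdiv_lt_0_compat; auto. assert (0 < INR a) by (apply lt_0_INR; lia). nra. }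
      assert (EI : forall x, setI G (mult g) x <-> mult (qG * INR a) x)
        by (apply (inter_char G (mult g) qG a b); auto; intro; unfold g; tauto).
      exists a, b. split; [|split]; auto.
      * apply (index_ext (mult qG) (mult (qG * INR a))). intro; symmetry; auto.
        intro; symmetry; auto. apply idx_gen; auto.
      * apply (index_ext (mult g) (mult (g * INR b))). tauto.
        intro x. rewrite EI. apply mult_eq. unfold g. field. lra.
        apply idx_gen; auto.
    + intros k l Hk Hl E.
      assert (Hink := nth_In (Lst n) (0, 0)%nat Hk). assert (Hinl := nth_In (Lst n) (0, 0)%nat Hl).
      apply (proj1 (NoDup_nth (Lst n) (0, 0)%nat) (NoDup_L n)); auto.
      destruct (nth k (Lst n) (0, 0)%nat) as [a b]. destruct (nth l (Lst n) (0, 0)%nat) as [a' b'].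
      simpl in E. apply in_L in Hink. apply in_L in Hinl.
      destruct Hink as [[Ha [Hb _]] Hc]. destruct Hinl as [[Ha' [Hb' _]] Hc'].
      destruct (gen_inj qG a b a' b' Hq Ha Hb Ha' Hb' Hc Hc' E). subst; auto.
    + intros D [HD [i [j [Hi [Hj Hij]]]]].
      destruct (struct G D (setI G D) qG i j Hq HD EG0 ltac:(intro; unfold setI; tauto) Hi Hj)
        as [u' [N' [Hu' [HN' ED0]]]].
      destruct (reduce u' N' Hu' HN') as [a [b [Ha [Hb [Hc Eab]]]]].
      assert (ED : forall x, D x <-> mult (qG * INR a / INR b) x).
      { intro x. rewrite ED0. apply mult_eq. unfold Rdiv. rewrite !Rmult_assoc. f_equal. exact Eab. }
      assert (0 < INR b) by (apply lt_0_INR; lia).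
      set (g := qG * INR a / INR b) in *.
      assert (Hg : 0 < g). { unfold g. apply Rdiv_lt_0_compat; auto. assert (0 < INR a) by (apply lt_0_INR; lia). nra. }
      assert (EI : forall x, setI G D x <-> mult (qG * INR a) x) by (apply (inter_char G D qG a b); auto).
      assert (Hai : (a <= i)%nat).
      { apply (lower_gen qG a i (setI G D) Hq); auto. apply (index_ext G (setI G D)); auto. tauto. }
      assert (Hbj : (b <= j)%nat).
      { apply (lower_gen g b j (setI G D) Hg).
        apply (index_ext D (setI G D)); auto. tauto.
        intro x. rewrite EI. apply mult_eq. unfold g. field. lra. }
      assert (Hin : In (a, b) (Lst n)).
      { apply in_L. split; auto. split; auto. split; auto. pose proof (Nat.mul_le_mono _ _ _ _ Hai Hbj). lia. }
      destruct (In_nth _ _ (0, 0)%nat Hin) as [k [Hk Ek]]. exists k. split; auto.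
      rewrite Ek. simpl. intro x. rewrite ED. tauto.
  -
    exists 2%nat. split. lia. intro n.
    destruct (Nat.eq_dec (Cc n) 0) as [E|NE].
    + rewrite E, ln_INR_0. pose proof (ln_INR_nonneg (2 * n)). simpl (INR 2). lra.
    + assert (Hn : (1 <= n)%nat). { pose proof (Cc_le_sq n). destruct n; lia. }
      assert (ln (INR (Cc n)) <= ln (INR n * INR n)).
      { rewrite <- mult_INR. apply ln_le. apply lt_0_INR; lia. apply le_INR, Cc_le_sq. }
      assert (0 < INR n) by (apply lt_0_INR; lia).
      rewrite ln_mult in H by auto.
      assert (ln (INR n) <= ln (INR (2 * n))) by (apply ln_le; auto; apply le_INR; lia).
      simpl (INR 2). lra.
  - exists 1%nat. split. lia. intro n. rewrite Nat.mul_1_l. simpl (INR 1).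
    destruct n. rewrite ln_INR_0. pose proof (ln_INR_nonneg (Cc 0)). lra.
    assert (ln (INR (S n)) <= ln (INR (Cc (S n)))) by (apply ln_le; [apply lt_0_INR; lia | apply le_INR, Cc_ge]).
    lra.
  - exists (3 ^ 8)%nat. split. apply Nat.neq_0_lt_0, Nat.pow_nonzero; lia. intro n.
    apply lower_main.
    + rewrite pow_INR. replace (INR 3) with 3 by (simpl; lra). rewrite ln_pow by lra.
      pose proof ln3. replace (INR 8) with 8 by (simpl; lra). lra.
    + apply Nat.neq_0_lt_0, Nat.pow_nonzero; lia.
  - exists 3%nat. split. lia. intro n.
    pose proof (Cc_up n).
    destruct n. rewrite Nat.mul_0_r in *. simpl (INR 0) in *. lra.
    assert (0 < INR (S n)) by (apply lt_0_INR; lia).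
    rewrite mult_INR, ln_mult by (apply lt_0_INR; lia).
    pose proof ln3. pose proof (ln_INR_nonneg (S n)). replace (INR 3) with 3 by (simpl; lra).
    set (x := INR (S n)) in *. set (L := ln x) in *.
    assert (A1 : x * 1 <= x * ln 3) by (apply Rmult_le_compat_l; lra).
    assert (A2 : 0 <= x * L) by (apply Rmult_le_pos; lra).
    lra.
Qed.
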